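(* Suppose that $D:=\sum_{j=0}^\infty\delta^+(j)<\infty$. Then for every $i\in\mathbb Z_+$, $$\mathbb E_i\exp\Big(\sum_{j=0}^\infty\delta^+(j)\ell(j)\Big)\le\sup_{j\in\mathbb Z_+}\mathbb E_i e^{D\ell(j)}\le\infty;$$ in particular, whenever the right-hand side is finite for every $i$, condition (C) holds and $f(i)\le\sup_{j}\mathbb E_i e^{D\ell(j)}$. If in addition, for every fixed $N\in\mathbb Z_+$, $\mathbb P_i\{X_n>N\text{ for all }n\ge0\}\to1$ as $i\to\infty$, and $\sup_{i\in\mathbb Z_+}\mathbb E_i e^{D\ell(i)}<\infty$, then $\limsup_{i\to\infty}f(i)\le1$.
   Context: Let $\mathbb Z_+=\{0,1,2,\dots\}$. Let $Q$ be a nonnegative transition kernel on $\mathbb Z_+$: $Q(i,j)\ge 0$ and $0<Q(i,\mathbb Z_+):=\sum_{j\ge0}Q(i,j)<\infty$ for every $i$, and $Q$ is irreducible. Let $P(i,j):=Q(i,j)/Q(i,\mathbb Z_+)$ and let $(X_n)_{n\ge0}$ be a Markov chain on $\mathbb Z_+$ with transition matrix $P$; $\mathbb P_i,\mathbb E_i$ denote probability and expectation given $X_0=i$. Let $\delta(j):=\log Q(j,\mathbb Z_+)$, $\delta^+:=\max(\delta,0)$. The local time at $j$ is $\ell(j):=\sum_{n=0}^\infty\mathbf 1\{X_n=j\}$. Condition (C): for every $i$, $\mathbb E_i\prod_{n=0}^\infty \max(Q(X_n,\mathbb Z_+),1)<\infty$ (equivalently $\mathbb E_i\exp(\sum_n\delta^+(X_n))<\infty$).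 Under (C) define $f(i):=\mathbb E_i\prod_{n=0}^\infty Q(X_n,\mathbb Z_+)\in[0,\infty)$. *)

(* Defs.v *)
From Stdlib Require Import Reals Lra List.
Import ListNotations.
Open Scope R_scope.

(* A path started at i is written i :: xs, xs = [X_1; ...; X_N].          *)
Fixpoint pw (W : nat -> nat -> R) (x : nat) (xs : list nat) : R :=
  match xs with
  | nil => 1
  | y :: ys => W x y * pw W y ys
  end.

Fixpoint boxsum (N K : nat) (g : list nat -> R) : R :=
  match N with
  | O => g nil
  | S N' => sum_f_R0 (fun k => boxsum N' K (fun xs => g (k :: xs))) K
  end.

(* Transition matrix P(i,j) = Q(i,j)/Q(i,Z+), with q i = Q(i,Z+). *)
Definition Pmat (Q : nat -> nat -> R) (q : nat -> R) : nat -> nat -> R :=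
  fun i j => Q i j / q i.

(* Truncated finite-horizon expectation:
   E_i [ F(X_0,...,X_N) ; X_1,...,X_N <= K ].
   The true finite-horizon expectation E_i F(X_0..X_N) is the (monotone,
   F >= 0) limit/sup of this as K -> infinity. *)
Definition Eb (P : nat -> nat -> R) (F : list nat -> R) (N K i : nat) : R :=
  boxsum N K (fun xs => pw P i xs * F (i :: xs)).

(* For a nonnegative path functional F that is nondecreasing along path
   extensions, "E_i F(X_0, X_1, ...) <= M" (with F(X_0,X_1,...) the monotone
   limit of F(X_0..X_N)) means: every truncated finite-horizon expectation is
   <= M (monotone convergence). *)
Definition Einf_le (P : nat -> nat -> R) (F : list nat -> R) (i : nat) (M : R)
  : Prop := forall N K, Eb P F N K i <= M.

(* "E_i F(X_0..X_N) >= c", i.e. sup_K Eb >= c. *)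
Definition Efin_ge (P : nat -> nat -> R) (F : list nat -> R) (N i : nat) (c : R)
  : Prop := forall c', c' < c -> exists K, c' <= Eb P F N K i.

Fixpoint sumlist (g : nat -> R) (xs : list nat) : R :=
  match xs with nil => 0 | x :: ys => g x + sumlist g ys end.
Fixpoint prodlist (g : nat -> R) (xs : list nat) : R :=
  match xs with nil => 1 | x :: ys => g x * prodlist g ys end.
Fixpoint cnt (j : nat) (xs : list nat) : nat :=
  match xs with nil => O | x :: ys => if Nat.eqb x j then S (cnt j ys) else cnt j ys end.

Definition dplus (q : nat -> R) (j : nat) : R := Rmax (ln (q j)) 0.

Definition Sfun (q : nat -> R) (xs : list nat) : R := exp (sumlist (dplus q) xs).
Definition Lfun (D : R) (j : nat) (xs : list nat) : R := exp (D * INR (cnt j xs)).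
Definition Cfun (q : nat -> R) (xs : list nat) : R := prodlist (fun x => Rmax (q x) 1) xs.
Definition Qprod (q : nat -> R) (xs : list nat) : R := prodlist q xs.
Definition stay_above (N : nat) (xs : list nat) : R :=
  if forallb (fun x => Nat.ltb N x) xs then 1 else 0.

Definition irreducible (Q : nat -> nat -> R) : Prop :=
  forall i j, exists xs, last (i :: xs) i = j /\ 0 < pw Q i xs.

Definition condC (Q : nat -> nat -> R) (q : nat -> R) : Prop :=
  forall i, exists M, Einf_le (Pmat Q q) (Cfun q) i M.

(* f is the function f(i) = E_i prod_{n>=0} Q(X_n,Z+), realised as
   lim_N E_i prod_{n<=N} Q(X_n,Z+)  (dominated convergence under (C)),
   where E_i prod_{n<=N} Q(X_n,Z+) = lim_K (truncated expectation). *)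
Definition is_f (Q : nat -> nat -> R) (q : nat -> R) (f : nat -> R) : Prop :=
  forall i, exists g : nat -> R,
    (forall N, Un_cv (fun K => Eb (Pmat Q q) (Qprod q) N K i) (g N)) /\
    Un_cv g (f i).

(* Main.v *)
Require Import Defs.
From Stdlib Require Import Reals List.
From Stdlib Require Import Lra Lia Classical ClassicalEpsilon.
Import ListNotations.
Open Scope R_scope.


Lemma boxsum_ext N K (g h : list nat -> R) :
  (forall xs, g xs = h xs) -> boxsum N K g = boxsum N K h.
Proof.
  revert g h; induction N as [|N IH]; intros g h H; simpl; auto.
  apply sum_eq; intros k _; apply IH; auto.
Qed.

Lemma boxsum_mono N K (g h : list nat -> R) :
  (forall xs, Forall (fun x => (x <= K)%nat) xs -> g xs <= h xs) ->
  boxsum N K g <= boxsum N K h.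
Proof.
  revert g h; induction N as [|N IH]; intros g h H; simpl.
  - apply H; constructor.
  - apply sum_Rle; intros k Hk; apply IH; intros xs Hxs; apply H; constructor; auto.
Qed.

Lemma boxsum_plus N K (g h : list nat -> R) :
  boxsum N K (fun xs => g xs + h xs) = boxsum N K g + boxsum N K h.
Proof.
  revert g h; induction N as [|N IH]; intros g h; simpl; auto.
  rewrite <- sum_plus; apply sum_eq; intros k _; apply IH.
Qed.

Lemma boxsum_scal N K c (g : list nat -> R) :
  boxsum N K (fun xs => c * g xs) = c * boxsum N K g.
Proof.
  revert g; induction N as [|N IH]; intros g; simpl; auto.
  rewrite scal_sum; apply sum_eq; intros k _; rewrite IH; ring.
Qed.

Lemma Eb_ext P F G N K i :
  (forall xs, F (i :: xs) = G (i :: xs)) -> Eb P F N K i = Eb P G N K i.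
Proof. intro H; unfold Eb; apply boxsum_ext; intro xs; rewrite H; auto. Qed.

Lemma Eb_S P F N K i :
  Eb P F (S N) K i = sum_f_R0 (fun k => P i k * Eb P (fun p => F (i :: p)) N K k) K.
Proof.
  unfold Eb; simpl; apply sum_eq; intros k _.
  rewrite <- boxsum_scal; apply boxsum_ext; intro xs; simpl; ring.
Qed.

Lemma Eb_plus P F G N K i :
  Eb P (fun p => F p + G p) N K i = Eb P F N K i + Eb P G N K i.
Proof. unfold Eb; rewrite <- boxsum_plus; apply boxsum_ext; intros; ring. Qed.

Lemma Eb_scal P c F N K i :
  Eb P (fun p => c * F p) N K i = c * Eb P F N K i.
Proof. unfold Eb; rewrite <- boxsum_scal; apply boxsum_ext; intros; ring. Qed.

Lemma Eb_opp P F N K i :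
  Eb P (fun p => - F p) N K i = - Eb P F N K i.
Proof.
  replace (- Eb P F N K i) with (-1 * Eb P F N K i) by ring.
  rewrite <- Eb_scal; apply Eb_ext; intros; ring.
Qed.

Lemma Eb_sum P (h : nat -> list nat -> R) L N K i :
  Eb P (fun p => sum_f_R0 (fun j => h j p) L) N K i = sum_f_R0 (fun j => Eb P (h j) N K i) L.
Proof.
  induction L as [|L IH]; simpl; [apply Eb_ext; auto|].
  rewrite Eb_plus, IH; auto.
Qed.

Lemma pw_nonneg P (HP : forall i j, 0 <= P i j) x xs : 0 <= pw P x xs.
Proof.
  revert x; induction xs as [|y ys IH]; intros x; simpl; [lra|].
  apply Rmult_le_pos; auto.
Qed.

Lemma Eb_mono P (HP : forall i j, 0 <= P i j) F G N K i :
  (forall xs, Forall (fun x => (x <= K)%nat) xs -> F (i :: xs) <= G (i :: xs)) ->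
  Eb P F N K i <= Eb P G N K i.
Proof.
  intro H; unfold Eb; apply boxsum_mono; intros xs Hxs.
  apply Rmult_le_compat_l; [apply pw_nonneg; auto| auto].
Qed.

Lemma Eb_zero P N K i : Eb P (fun _ => 0) N K i = 0.
Proof.
  replace (Eb P (fun _ => 0) N K i) with (Eb P (fun p => 0 * 0) N K i).
  - rewrite Eb_scal; ring.
  - apply Eb_ext; intros; ring.
Qed.

Lemma Eb_nonneg P (HP : forall i j, 0 <= P i j) F N K i :
  (forall p, 0 <= F p) -> 0 <= Eb P F N K i.
Proof.
  intro H; rewrite <- (Eb_zero P N K i); apply Eb_mono; auto.
Qed.

Lemma sum_le_ext (f : nat -> R) n m : (n <= m)%nat -> (forall k, 0 <= f k) ->
  sum_f_R0 f n <= sum_f_R0 f m.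
Proof.
  intros Hnm Hf; induction Hnm; [lra|]. simpl; specialize (Hf (S m)); lra.
Qed.

Lemma sum_nonneg (f : nat -> R) n : (forall k, 0 <= f k) -> 0 <= sum_f_R0 f n.
Proof.
  intro Hf; induction n; simpl; auto. specialize (Hf (S n)); lra.
Qed.

Lemma Eb_monoK P (HP : forall i j, 0 <= P i j) N : forall F K K' i,
  (forall p, 0 <= F p) -> (K <= K')%nat -> Eb P F N K i <= Eb P F N K' i.
Proof.
  induction N as [|N IH]; intros F K K' i HF HK.
  - unfold Eb; simpl; lra.
  - rewrite !Eb_S.
    apply Rle_trans with (sum_f_R0 (fun k => P i k * Eb P (fun p => F (i :: p)) N K' k) K).
    + apply sum_Rle; intros k _; apply Rmult_le_compat_l; auto.
    + apply sum_le_ext; auto; intro k; apply Rmult_le_pos; auto.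
      apply Eb_nonneg; auto.
Qed.

Lemma Eb_one_le P (HP : forall i j, 0 <= P i j) (Hrow : forall i K, sum_f_R0 (P i) K <= 1) N :
  forall K i, Eb P (fun _ => 1) N K i <= 1.
Proof.
  induction N as [|N IH]; intros K i.
  - unfold Eb; simpl; lra.
  - rewrite Eb_S.
    apply Rle_trans with (sum_f_R0 (P i) K); [|auto].
    apply sum_Rle; intros k _.
    rewrite <- (Rmult_1_r (P i k)) at 2; apply Rmult_le_compat_l; auto.
Qed.

Lemma Eb_snoc P N : forall F K i,
  Eb P F (S N) K i =
  Eb P (fun p => sum_f_R0 (fun k => P (last p 0%nat) k * F (p ++ [k])) K) N K i.
Proof.
  induction N as [|N IH]; intros F K i.
  - rewrite Eb_S; unfold Eb; simpl. rewrite Rmult_1_l. apply sum_eq; intros k _; ring.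
  - rewrite Eb_S. rewrite (Eb_S P _ N K i). apply sum_eq; intros k _.
    f_equal. rewrite IH. apply Eb_ext. intros xs. reflexivity.
Qed.

Lemma cv_le (u : nat -> R) l c :
  Un_cv u l -> (exists K0, forall K, (K0 <= K)%nat -> u K <= c) -> l <= c.
Proof.
  intros Hu [K0 HK]. destruct (Rle_dec l c) as [|Hn]; auto.
  destruct (Hu (l - c)) as [N HN]; [lra|].
  specialize (HN (max N K0) ltac:(lia)). specialize (HK (max N K0) ltac:(lia)).
  unfold Rdist in HN. apply Rabs_def2 in HN. lra.
Qed.

Lemma cv_ge (u : nat -> R) l c :
  Un_cv u l -> (exists K0, forall K, (K0 <= K)%nat -> c <= u K) -> c <= l.
Proof.
  intros Hu [K0 HK]. destruct (Rle_dec c l) as [|Hn]; auto.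
  destruct (Hu (c - l)) as [N HN]; [lra|].
  specialize (HN (max N K0) ltac:(lia)). specialize (HK (max N K0) ltac:(lia)).
  unfold Rdist in HN. apply Rabs_def2 in HN. lra.
Qed.

Lemma infsum_partial_le (u : nat -> R) l n :
  (forall k, 0 <= u k) -> infinite_sum u l -> sum_f_R0 u n <= l.
Proof.
  intros Hu Hl. apply Rle_trans with (sum_f_R0 u n); [lra|].
  apply (cv_ge (sum_f_R0 u)); [exact Hl|]. exists n. intros K HK.
  induction HK; [lra|]. simpl. specialize (Hu (S m)); lra.
Qed.

Lemma quasi_mono_cv (g a : nat -> R) A :
  Un_growing a -> Un_cv a A -> (forall n, 0 <= g n) ->
  (forall n, g (S n) <= g n + a (S n) - a n) ->
  exists l, Un_cv g l.
Proof.
  intros Ha HA Hg Hstep.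
  assert (Hm : forall n m, (n <= m)%nat -> g m <= g n + a m - a n).
  { intros n m Hnm; induction Hnm; [lra|]. specialize (Hstep m); lra. }
  assert (HaA : forall n, a n <= A) by (apply growing_ineq; auto).
  assert (Hamono : forall n m, (n <= m)%nat -> a n <= a m).
  { intros n m Hnm; induction Hnm; [lra|]. specialize (Ha m); lra. }
  assert (HC : Cauchy_crit g).
  { intros eps Heps.
    destruct (HA (eps/3)) as [N HN]; [lra|].
    set (E := fun x => exists m, (N <= m)%nat /\ x = - g m).
    assert (Hb : bound E).
    { exists 0. intros x [m [_ ->]]. specialize (Hg m); lra. }
    destruct (completeness E Hb) as [s [Hs1 Hs2]].
    { exists (- g N). exists N; split; auto. }
    (* -s = inf g over m>=N *)
    assert (Hex : exists N1, (N <= N1)%nat /\ g N1 < - s + eps/3).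
    { destruct (classic (exists N1, (N <= N1)%nat /\ g N1 < - s + eps/3)) as [H|H]; auto.
      exfalso. assert (s <= s - eps/3); [|lra].
      apply Hs2. intros x [m [Hm' ->]].
      destruct (Rlt_dec (g m) (- s + eps / 3)) as [Hl|Hl].
      - exfalso; apply H; exists m; auto.
      - lra. }
    destruct Hex as [N1 [HN1 HgN1]].
    exists N1. intros n m Hn Hm'.
    assert (B : forall k, (N1 <= k)%nat -> -s <= g k /\ g k < - s + 2*eps/3).
    { intros k Hk. split.
      - assert (- g k <= s); [apply Hs1; exists k; split; [lia|reflexivity]|]. lra.
      - specialize (Hm N1 k Hk). specialize (HN N1 HN1). unfold Rdist in HN.
        apply Rabs_def2 in HN. specialize (HaA k). lra. }
    destruct (B n Hn), (B m Hm'). unfold Rdist. apply Rabs_def1; lra. }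
  destruct (R_complete g HC) as [l Hl]; exists l; auto.
Qed.

Lemma sum_ind (d : nat -> R) x L :
  sum_f_R0 (fun j => d j * (if Nat.eqb x j then 1 else 0)) L =
  if Nat.leb x L then d x else 0.
Proof.
  induction L as [|L IH]; simpl.
  - destruct x; simpl; ring.
  - rewrite IH. destruct (Nat.leb x L) eqn:E1; destruct (Nat.eqb x (S L)) eqn:E2;
    destruct (Nat.leb x (S L)) eqn:E3;
    apply Nat.leb_le in E1 || apply Nat.leb_gt in E1;
    apply Nat.eqb_eq in E2 || apply Nat.eqb_neq in E2;
    apply Nat.leb_le in E3 || apply Nat.leb_gt in E3; try lia; subst; ring.
Qed.

Lemma sumlist_cnt (d : nat -> R) L p : Forall (fun x => (x <= L)%nat) p ->
  sumlist d p = sum_f_R0 (fun j => d j * INR (cnt j p)) L.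
Proof.
  induction p as [|x p IH]; intro H; simpl.
  - transitivity (sum_f_R0 (fun _ => 0) L); [rewrite sum_cte; ring| apply sum_eq; intros; simpl; ring].
  - inversion H; subst. rewrite IH by auto.
    transitivity (sum_f_R0 (fun j => d j * INR (cnt j p) + d j * (if Nat.eqb x j then 1 else 0)) L).
    + rewrite sum_plus, sum_ind. replace (Nat.leb x L) with true by (symmetry; apply Nat.leb_le; auto). ring.
    + apply sum_eq; intros j _. destruct (Nat.eqb x j); [rewrite S_INR|]; ring.
Qed.

Lemma jensen (d c : nat -> R) L D :
  (forall j, 0 <= d j) -> sum_f_R0 d L <= D ->
  D * exp (sum_f_R0 (fun j => d j * c j) L) <=
  sum_f_R0 (fun j => d j * exp (D * c j)) L + (D - sum_f_R0 d L).
Proof.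
  intros Hd HS. set (t := sum_f_R0 (fun j => d j * c j) L). set (S := sum_f_R0 d L).
  assert (tang : forall y, exp t * (1 + y - t) <= exp y).
  { intro y. replace (exp y) with (exp t * exp (y - t)).
    - apply Rmult_le_compat_l; [left; apply exp_pos|]. pose proof (exp_ineq1_le (y - t)); lra.
    - rewrite <- exp_plus; f_equal; ring. }
  assert (H1 : sum_f_R0 (fun j => d j * (exp t * (1 + D * c j - t))) L <=
               sum_f_R0 (fun j => d j * exp (D * c j)) L).
  { apply sum_Rle; intros; apply Rmult_le_compat_l; auto. }
  assert (H2 : sum_f_R0 (fun j => d j * (exp t * (1 + D * c j - t))) L =
               exp t * (1 - t) * S + exp t * D * t).
  { unfold S, t. rewrite !scal_sum, <- sum_plus. apply sum_eq; intros; ring. }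
  assert (H3 : (D - S) * (exp t * (1 + 0 - t)) <= (D - S) * exp 0).
  { apply Rmult_le_compat_l; [unfold S; lra| apply tang]. }
  rewrite exp_0 in H3. nra.
Qed.

Lemma last_le i K xs : Forall (fun x => (x <= K)%nat) xs -> (last (i :: xs) 0%nat <= max i K)%nat.
Proof.
  revert i; induction xs as [|x xs IH]; intros i H; simpl; [lia|].
  inversion H; subst. specialize (IH x H3). simpl in IH. destruct xs; lia.
Qed.

Lemma prodlist_app (g : nat -> R) p r : prodlist g (p ++ r) = prodlist g p * prodlist g r.
Proof. induction p; simpl; [ring|rewrite IHp; ring]. Qed.

Lemma Cfun_Sfun q (Hq : forall i, 0 < q i) p : Cfun q p = Sfun q p.
Proof.
  unfold Cfun, Sfun; induction p as [|x p IH]; simpl; [rewrite exp_0; auto|].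
  rewrite exp_plus, IH. f_equal. unfold dplus.
  destruct (Rle_dec 1 (q x)) as [H|H].
  - rewrite Rmax_left by auto. rewrite Rmax_left.
    + rewrite exp_ln; auto.
    + destruct H as [H|H]; [left; rewrite <- ln_1; apply ln_increasing; lra| rewrite <- H, ln_1; lra].
  - rewrite Rmax_right by lra. rewrite Rmax_right; [symmetry; apply exp_0|].
    left; rewrite <- ln_1; apply ln_increasing; auto; lra.
Qed.

Lemma Qprod_nonneg q (Hq : forall i, 0 < q i) p : 0 <= Qprod q p.
Proof. unfold Qprod; induction p; simpl; [lra|]. specialize (Hq a); nra. Qed.

Lemma Cfun_ge1 q p : 1 <= Cfun q p.
Proof.
  unfold Cfun; induction p; simpl; [lra|]. pose proof (Rmax_r (q a) 1). nra.
Qed.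

Lemma Qprod_le_Cfun q (Hq : forall i, 0 < q i) p : Qprod q p <= Cfun q p.
Proof.
  unfold Qprod, Cfun; induction p; simpl; [lra|].
  apply Rmult_le_compat; [left; auto| |apply Rmax_l|auto].
  apply Qprod_nonneg; auto.
Qed.

Lemma Lfun_ge1 D j p : 0 <= D -> 1 <= Lfun D j p.
Proof.
  intro HD; unfold Lfun. rewrite <- exp_0. destruct (Rle_lt_or_eq_dec 0 (D * INR (cnt j p))).
  - apply Rmult_le_pos; auto; apply pos_INR.
  - left; apply exp_increasing; auto.
  - rewrite e; lra.
Qed.

Lemma dplus_nonneg q j : 0 <= dplus q j.
Proof. unfold dplus; apply Rmax_r. Qed.

Lemma D_nonneg q D : infinite_sum (dplus q) D -> 0 <= D.
Proof.
  intro H; apply Rle_trans with (sum_f_R0 (dplus q) 0).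
  - simpl; apply dplus_nonneg.
  - apply infsum_partial_le; auto; apply dplus_nonneg.
Qed.

Lemma D0_Sfun q D : infinite_sum (dplus q) D -> D = 0 -> forall p, Sfun q p = 1.
Proof.
  intros H HD0 p. unfold Sfun. rewrite <- exp_0. f_equal.
  assert (Hz : forall j, dplus q j = 0).
  { intro j. apply Rle_antisym; [|apply dplus_nonneg].
    apply Rle_trans with (sum_f_R0 (dplus q) j).
    - destruct j; simpl; [lra|]. pose proof (sum_nonneg (dplus q) j (dplus_nonneg q)); lra.
    - rewrite <- HD0; apply infsum_partial_le; auto; apply dplus_nonneg. }
  induction p; simpl; auto. rewrite Hz, IHp; ring.
Qed.

Lemma Eb_Sfun_jensen q P D (HP : forall i j, 0 <= P i j) (HD : infinite_sum (dplus q) D) N K i :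
  D * Eb P (Sfun q) N K i <=
  sum_f_R0 (fun j => dplus q j * Eb P (Lfun D j) N K i) (max i K) +
  (D - sum_f_R0 (dplus q) (max i K)) * Eb P (fun _ => 1) N K i.
Proof.
  set (L := max i K). set (SL := sum_f_R0 (dplus q) L).
  rewrite <- Eb_scal.
  apply Rle_trans with (Eb P (fun p => sum_f_R0 (fun j => dplus q j * Lfun D j p) L + (D - SL) * 1) N K i).
  - apply Eb_mono; auto. intros xs Hxs.
    assert (HF : Forall (fun x => (x <= L)%nat) (i :: xs)).
    { constructor; [unfold L; lia|]. eapply Forall_impl; [|exact Hxs]. intros a Ha; simpl in Ha; unfold L; lia. }
    unfold Sfun. rewrite (sumlist_cnt _ L _ HF). rewrite Rmult_1_r. unfold Lfun, SL.
    apply (jensen (dplus q) (fun j => INR (cnt j (i :: xs)))).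
    + apply dplus_nonneg.
    + apply infsum_partial_le; auto; apply dplus_nonneg.
  - rewrite Eb_plus, Eb_sum, Eb_scal. right. f_equal. apply sum_eq; intros. rewrite Eb_scal; auto.
Qed.

Lemma Sfun_bound1 q P D (HP : forall i j, 0 <= P i j) (HD : infinite_sum (dplus q) D) N K i M :
  (forall j, Eb P (Lfun D j) N K i <= M) -> Eb P (Sfun q) N K i <= M.
Proof.
  intros HM. pose proof (D_nonneg q D HD) as HD0.
  assert (H1 : Eb P (fun _ => 1) N K i <= M).
  { apply Rle_trans with (Eb P (Lfun D 0) N K i); auto. apply Eb_mono; auto.
    intros; apply Lfun_ge1; auto. }
  destruct HD0 as [HDp|HD0].
  - pose proof (Eb_Sfun_jensen q P D HP HD N K i) as J.
    set (L := max i K) in J.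
    assert (Hs : sum_f_R0 (fun j => dplus q j * Eb P (Lfun D j) N K i) L <= sum_f_R0 (dplus q) L * M).
    { rewrite Rmult_comm, scal_sum. apply sum_Rle; intros.
      apply Rmult_le_compat_l; auto; apply dplus_nonneg. }
    assert (HSL : sum_f_R0 (dplus q) L <= D) by (apply infsum_partial_le; auto; apply dplus_nonneg).
    assert (H2 : (D - sum_f_R0 (dplus q) L) * Eb P (fun _ => 1) N K i <= (D - sum_f_R0 (dplus q) L) * M).
    { apply Rmult_le_compat_l; lra. }
    apply Rmult_le_reg_l with D; auto. lra.
  - rewrite (Eb_ext P (Sfun q) (fun _ => 1)); auto. intros; apply D0_Sfun with D; auto.
Qed.

Fixpoint Hh (P : nat -> nat -> R) (j N K i : nat) : R :=
  match N with
  | O => 0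
  | S N' => sum_f_R0 (fun k => P i k * (if Nat.eqb k j then 1 else Hh P j N' K k)) K
  end.

Lemma stay_nonneg N0 p : 0 <= stay_above N0 p.
Proof. unfold stay_above; destruct forallb; lra. Qed.

Lemma LA P (HP : forall i j, 0 <= P i j) (Hrow : forall i K, sum_f_R0 (P i) K <= 1)
  D j M K (HD : 0 <= D) (HM : 0 <= M)
  (Hj : forall N' K', Eb P (Lfun D j) N' K' j <= M) :
  forall N i, i <> j -> Eb P (Lfun D j) N K i <= 1 + M * Hh P j N K i.
Proof.
  induction N as [|N IH]; intros i Hij.
  - unfold Eb; simpl. unfold Lfun; simpl.
    replace (Nat.eqb i j) with false by (symmetry; apply Nat.eqb_neq; auto).
    simpl. rewrite Rmult_0_r, exp_0. lra.
  - rewrite Eb_S. simpl Hh.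
    apply Rle_trans with (sum_f_R0 (fun k => P i k * 1 + M * (P i k * (if Nat.eqb k j then 1 else Hh P j N K k))) K).
    + apply sum_Rle; intros k _.
      rewrite (Eb_ext P _ (Lfun D j)).
      2:{ intros xs; unfold Lfun; simpl. replace (Nat.eqb i j) with false by (symmetry; apply Nat.eqb_neq; auto). auto. }
      destruct (Nat.eqb k j) eqn:E.
      * apply Nat.eqb_eq in E; rewrite E. specialize (Hj N K). specialize (HP i j).
        assert (P i j * Eb P (Lfun D j) N K j <= P i j * M) by (apply Rmult_le_compat_l; auto). nra.
      * apply Nat.eqb_neq in E. specialize (IH k E). specialize (HP i k).
        assert (P i k * Eb P (Lfun D j) N K k <= P i k * (1 + M * Hh P j N K k)) by (apply Rmult_le_compat_l; auto). nra.
    + rewrite sum_plus. specialize (Hrow i K).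
      assert (sum_f_R0 (fun k => P i k * 1) K = sum_f_R0 (P i) K) by (apply sum_eq; intros; ring).
      match goal with |- _ + sum_f_R0 (fun k => M * @?X k) K <= _ =>
        assert (sum_f_R0 (fun k => M * X k) K = M * sum_f_R0 X K) by (rewrite scal_sum; apply sum_eq; intros; ring) end.
      lra.
Qed.

Lemma Hh_nonneg P (HP : forall i j, 0 <= P i j) j K N : forall i, 0 <= Hh P j N K i.
Proof.
  induction N as [|N IH]; intros i; simpl; [lra|].
  apply sum_nonneg; intro k; apply Rmult_le_pos; auto. destruct (Nat.eqb k j); auto; lra.
Qed.

Lemma LB P (HP : forall i j, 0 <= P i j) (Hrow : forall i K, sum_f_R0 (P i) K <= 1)
  j N0 K (HjN : (j <= N0)%nat) :
  forall N i, i <> j -> Hh P j N K i + Eb P (stay_above N0) N K i <= 1.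
Proof.
  induction N as [|N IH]; intros i Hij.
  - unfold Eb; simpl. unfold stay_above; simpl. destruct (Nat.ltb N0 i); simpl; lra.
  - rewrite Eb_S. simpl Hh. rewrite <- sum_plus.
    apply Rle_trans with (sum_f_R0 (P i) K); auto.
    apply sum_Rle; intros k _.
    assert (Hst : Eb P (fun p => stay_above N0 (i :: p)) N K k <= Eb P (stay_above N0) N K k).
    { apply Eb_mono; auto. intros xs _. unfold stay_above.
      change (forallb (fun x => Nat.ltb N0 x) (i :: k :: xs)) with
        (andb (Nat.ltb N0 i) (forallb (fun x => Nat.ltb N0 x) (k :: xs))).
      destruct (Nat.ltb N0 i); destruct (forallb _ (k :: xs)); simpl; lra. }
    pose proof (HP i k) as HPik.
    destruct (Nat.eqb k j) eqn:E.
    + apply Nat.eqb_eq in E; subst k.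
      assert (Hz : Eb P (stay_above N0) N K j <= 0).
      { rewrite <- (Eb_zero P N K j). apply Eb_mono; auto. intros xs _.
        unfold stay_above; simpl. replace (Nat.ltb N0 j) with false by (symmetry; apply Nat.ltb_ge; auto).
        simpl; lra. }
      assert (P i j * Eb P (fun p => stay_above N0 (i :: p)) N K j <= P i j * 0).
      { apply Rmult_le_compat_l; auto; lra. } lra.
    + apply Nat.eqb_neq in E. specialize (IH k E).
      assert (P i k * Eb P (fun p => stay_above N0 (i :: p)) N K k <= P i k * Eb P (stay_above N0) N K k).
      { apply Rmult_le_compat_l; lra. } nra.
Qed.

Lemma Pmat_nonneg Q q (HQnn : forall i j, 0 <= Q i j) (Hqpos : forall i, 0 < q i) :
  forall i j, 0 <= Pmat Q q i j.
Proof.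
  intros i j; unfold Pmat, Rdiv. apply Rmult_le_pos; auto.
  left; apply Rinv_0_lt_compat; auto.
Qed.

Lemma sumP Q q x K : sum_f_R0 (Pmat Q q x) K = sum_f_R0 (fun j => Q x j) K / q x.
Proof. unfold Rdiv; rewrite Rmult_comm, scal_sum; apply sum_eq; intros; unfold Pmat, Rdiv; ring. Qed.

Lemma Pmat_row Q q (HQnn : forall i j, 0 <= Q i j) (Hq : forall i, infinite_sum (fun j => Q i j) (q i))
  (Hqpos : forall i, 0 < q i) : forall i K, sum_f_R0 (Pmat Q q i) K <= 1.
Proof.
  intros i K. rewrite sumP. apply Rmult_le_reg_l with (q i); auto.
  unfold Rdiv. rewrite Rmult_1_r. field_simplify; [|specialize (Hqpos i); lra].
  apply infsum_partial_le; auto.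
Qed.

Lemma Pmat_row_cv Q q (Hq : forall i, infinite_sum (fun j => Q i j) (q i))
  (Hqpos : forall i, 0 < q i) : forall L eta, 0 < eta ->
  exists K2, forall K x, (K2 <= K)%nat -> (x <= L)%nat -> 1 - eta <= sum_f_R0 (Pmat Q q x) K.
Proof.
  intros L eta Heta. induction L as [|L IH].
  - destruct (Hq 0%nat (eta * q 0%nat)) as [K2 HK2].
    { specialize (Hqpos 0%nat). apply Rmult_lt_0_compat; lra. }
    exists K2. intros K x HK Hx. replace x with 0%nat by lia.
    specialize (HK2 K HK). unfold Rdist in HK2. apply Rabs_def2 in HK2; destruct HK2 as [HKa HKb].
    rewrite sumP. specialize (Hqpos 0%nat).
    apply Rmult_le_reg_l with (q 0%nat); auto. unfold Rdiv. field_simplify; [|lra]. nra.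
  - destruct IH as [K1 HK1].
    destruct (Hq (S L) (eta * q (S L))) as [K2 HK2].
    { specialize (Hqpos (S L)). apply Rmult_lt_0_compat; lra. }
    exists (max K1 K2). intros K x HK Hx.
    destruct (Nat.eq_dec x (S L)) as [->|Hne].
    + specialize (HK2 K ltac:(lia)). unfold Rdist in HK2. apply Rabs_def2 in HK2; destruct HK2 as [HKa HKb].
      rewrite sumP. specialize (Hqpos (S L)).
      apply Rmult_le_reg_l with (q (S L)); auto. unfold Rdiv. field_simplify; [nra|lra].
    + apply HK1; lia.
Qed.

Lemma growing_bounded_cv (u : nat -> R) M :
  Un_growing u -> (forall n, u n <= M) -> { l | Un_cv u l }.
Proof.
  intros Hg Hb. apply growing_cv; auto. exists M. intros x [n ->]. auto.
Qed.

Lemma eta_lemma b c : 0 <= b -> (forall eta, 0 < eta -> (1 - eta) * b <= c) -> b <= c.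
Proof.
  intros Hb H. destruct (Rle_dec b c) as [|Hn]; auto. exfalso.
  assert (Hc : c < b) by lra.
  set (eta := (b - c) / (2 * (b + 1))).
  assert (He : 0 < eta) by (unfold eta; apply Rdiv_lt_0_compat; lra).
  specialize (H eta He).
  assert (eta * b < b - c).
  { unfold eta. apply Rmult_lt_reg_l with (2 * (b + 1)); [lra|].
    field_simplify; [|lra]. nra. }
  lra.
Qed.

Lemma KL Q q (HQnn : forall i j, 0 <= Q i j) (Hq : forall i, infinite_sum (fun j => Q i j) (q i))
  (Hqpos : forall i, 0 < q i) N i K1 eta : 0 < eta ->
  exists K2, forall K, (K2 <= K)%nat ->
    (1 - eta) * Eb (Pmat Q q) (Cfun q) N K1 i <=
    Eb (Pmat Q q) (fun p => sum_f_R0 (Pmat Q q (last p 0%nat)) K * Cfun q p) N K i.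
Proof.
  intros Heta. pose proof (Pmat_nonneg Q q HQnn Hqpos) as HP.
  destruct (Pmat_row_cv Q q Hq Hqpos (max i K1) eta Heta) as [K2 HK2].
  exists (max K1 K2). intros K HK.
  rewrite <- Eb_scal.
  apply Rle_trans with (Eb (Pmat Q q) (fun p => sum_f_R0 (Pmat Q q (last p 0%nat)) K * Cfun q p) N K1 i).
  - apply Eb_mono; auto. intros xs Hxs. apply Rmult_le_compat_r.
    + pose proof (Cfun_ge1 q (i :: xs)); lra.
    + apply HK2; [lia|]. apply last_le; auto.
  - apply Eb_monoK; auto; [|lia]. intro p. apply Rmult_le_pos.
    + apply sum_nonneg; intro; apply HP.
    + pose proof (Cfun_ge1 q p); lra.
Qed.

Lemma Cfun_snoc q p k : Cfun q (p ++ [k]) = Cfun q p * Rmax (q k) 1.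
Proof. unfold Cfun; rewrite prodlist_app; simpl; ring. Qed.

Lemma Qprod_snoc q p k : Qprod q (p ++ [k]) = Qprod q p * q k.
Proof. unfold Qprod; rewrite prodlist_app; simpl; ring. Qed.

Lemma sum_minus_l (f g : nat -> R) n : sum_f_R0 f n + - sum_f_R0 g n = sum_f_R0 (fun k => f k - g k) n.
Proof. induction n; simpl; [ring|rewrite <- IHn; ring]. Qed.

Lemma per_i Q q (HQnn : forall i j, 0 <= Q i j) (Hq : forall i, infinite_sum (fun j => Q i j) (q i))
  (Hqpos : forall i, 0 < q i) i Mi (HMi : forall N K, Eb (Pmat Q q) (Cfun q) N K i <= Mi) :
  exists l, exists g, (forall N, Un_cv (fun K => Eb (Pmat Q q) (Qprod q) N K i) (g N)) /\ Un_cv g l.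
Proof.
  set (P := Pmat Q q).
  pose proof (Pmat_nonneg Q q HQnn Hqpos) as HP. fold P in HP.
  assert (Hgrow : forall F N, (forall p, 0 <= F p) -> Un_growing (fun K => Eb P F N K i)).
  { intros F N HF K. apply Eb_monoK; auto. }
  assert (HQM : forall N K, Eb P (Qprod q) N K i <= Mi).
  { intros N K. eapply Rle_trans; [|apply (HMi N K)]. apply Eb_mono; auto.
    intros; apply Qprod_le_Cfun; auto. }
  set (a := fun N => proj1_sig (growing_bounded_cv _ Mi (Hgrow (Cfun q) N (fun p => Rle_trans _ _ _ Rle_0_1 (Cfun_ge1 q p))) (HMi N))).
  set (g := fun N => proj1_sig (growing_bounded_cv _ Mi (Hgrow (Qprod q) N (Qprod_nonneg q Hqpos)) (HQM N))).
  assert (Ha : forall N, Un_cv (fun K => Eb P (Cfun q) N K i) (a N)).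
  { intro N. unfold a. destruct growing_bounded_cv; auto. }
  assert (Hg : forall N, Un_cv (fun K => Eb P (Qprod q) N K i) (g N)).
  { intro N. unfold g. destruct growing_bounded_cv; auto. }
  clearbody a g.
  assert (HaK : forall N K, Eb P (Cfun q) N K i <= a N).
  { intros N K. apply (growing_ineq (fun K => Eb P (Cfun q) N K i)); auto.
    apply Hgrow; intro p; pose proof (Cfun_ge1 q p); lra. }
  assert (HgK : forall N K, Eb P (Qprod q) N K i <= g N).
  { intros N K. apply (growing_ineq (fun K => Eb P (Qprod q) N K i)); auto.
    apply Hgrow; apply Qprod_nonneg; auto. }
  assert (Hsnoc : forall N K, Eb P (fun p => sum_f_R0 (P (last p 0%nat)) K * Cfun q p) N K i <=
                              Eb P (Cfun q) (S N) K i).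
  { intros N K. rewrite Eb_snoc. apply Eb_mono; auto. intros xs _.
    rewrite Rmult_comm, scal_sum. apply sum_Rle. intros k _. rewrite Cfun_snoc.
    pose proof (Cfun_ge1 q (i :: xs)). pose proof (Rmax_r (q k) 1). specialize (HP (last (i :: xs) 0%nat) k).
    assert (Cfun q (i :: xs) <= Cfun q (i :: xs) * Rmax (q k) 1) by nra.
    assert (P (last (i :: xs) 0%nat) k * Cfun q (i :: xs) <= P (last (i :: xs) 0%nat) k * (Cfun q (i :: xs) * Rmax (q k) 1)) by (apply Rmult_le_compat_l; auto).
    lra. }
  assert (Hamono : Un_growing a).
  { intro N. apply (cv_le (fun K => Eb P (Cfun q) N K i)); auto.
    exists 0%nat. intros K1 _.
    apply eta_lemma.
    - apply Eb_nonneg; auto. intro p; pose proof (Cfun_ge1 q p); lra.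
    - intros eta Heta. destruct (KL Q q HQnn Hq Hqpos N i K1 eta Heta) as [K2 HK2].
      apply (cv_ge (fun K => Eb P (Cfun q) (S N) K i)); auto.
      exists K2. intros K HK. eapply Rle_trans; [apply (HK2 K HK)|]. apply Hsnoc. }
  assert (Hstep : forall N, g (S N) <= g N + a (S N) - a N).
  { intro N.
    assert (Hpt : forall K, Eb P (Qprod q) (S N) K i <=
       Eb P (Qprod q) N K i + Eb P (Cfun q) (S N) K i -
       Eb P (fun p => sum_f_R0 (P (last p 0%nat)) K * Cfun q p) N K i).
    { intro K. rewrite Eb_snoc. rewrite (Eb_snoc P N (Cfun q)).
      apply Rle_trans with (Eb P (fun p => sum_f_R0 (P (last p 0%nat)) K * Qprod q p +
            (sum_f_R0 (fun k => P (last p 0%nat) k * Cfun q (p ++ [k])) K +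
             - (sum_f_R0 (P (last p 0%nat)) K * Cfun q p))) N K i).
      - apply Eb_mono; auto. intros xs _. set (p := i :: xs).
        assert (E1 : sum_f_R0 (P (last p 0%nat)) K * Qprod q p = sum_f_R0 (fun k => P (last p 0%nat) k * Qprod q p) K)
          by (rewrite Rmult_comm, scal_sum; apply sum_eq; intros; ring).
        assert (E2 : sum_f_R0 (P (last p 0%nat)) K * Cfun q p = sum_f_R0 (fun k => P (last p 0%nat) k * Cfun q p) K)
          by (rewrite Rmult_comm, scal_sum; apply sum_eq; intros; ring).
        rewrite E1, E2, sum_minus_l, <- sum_plus. apply sum_Rle. intros k _.
        rewrite Qprod_snoc, Cfun_snoc.
        pose proof (Qprod_le_Cfun q Hqpos p). pose proof (Qprod_nonneg q Hqpos p).
        pose proof (Rmax_l (q k) 1). pose proof (Rmax_r (q k) 1). specialize (HP (last p 0%nat) k).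
        assert (Qprod q p * q k <= Qprod q p * Rmax (q k) 1) by (apply Rmult_le_compat_l; auto).
        assert (Qprod q p * (Rmax (q k) 1 - 1) <= Cfun q p * (Rmax (q k) 1 - 1)) by (apply Rmult_le_compat_r; lra).
        assert (P (last p 0%nat) k * (Qprod q p * q k) <=
                P (last p 0%nat) k * (Qprod q p + Cfun q p * Rmax (q k) 1 - Cfun q p)).
        { apply Rmult_le_compat_l; auto. nra. }
        nra.
      - rewrite !Eb_plus, Eb_opp.
        assert (Eb P (fun p => sum_f_R0 (P (last p 0%nat)) K * Qprod q p) N K i <= Eb P (Qprod q) N K i).
        { apply Eb_mono; auto. intros xs _. pose proof (Qprod_nonneg q Hqpos (i :: xs)).
          pose proof (Pmat_row Q q HQnn Hq Hqpos (last (i :: xs) 0%nat) K).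
          pose proof (sum_nonneg (P (last (i :: xs) 0%nat)) K (HP _)). fold P in H0. nra. }
        lra. }
    assert (H1 : forall K1 eta, 0 < eta -> g (S N) <= g N + a (S N) - (1 - eta) * Eb P (Cfun q) N K1 i).
    { intros K1 eta Heta. destruct (KL Q q HQnn Hq Hqpos N i K1 eta Heta) as [K2 HK2].
      apply (cv_le (fun K => Eb P (Qprod q) (S N) K i)); auto.
      exists K2. intros K HK. specialize (Hpt K). specialize (HK2 K HK). fold P in HK2.
      specialize (HgK N K). specialize (HaK (S N) K). lra. }
    assert (H2 : forall K1, Eb P (Cfun q) N K1 i <= g N + a (S N) - g (S N)).
    { intro K1. apply eta_lemma.
      - apply Eb_nonneg; auto. intro p; pose proof (Cfun_ge1 q p); lra.
      - intros eta Heta. specialize (H1 K1 eta Heta). lra. }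
    assert (a N <= g N + a (S N) - g (S N)).
    { apply (cv_le (fun K => Eb P (Cfun q) N K i)); auto. exists 0%nat; auto. }
    lra. }
  destruct (growing_bounded_cv a Mi Hamono) as [A HA].
  { intro N. apply (cv_le (fun K => Eb P (Cfun q) N K i)); auto. exists 0%nat; auto. }
  destruct (quasi_mono_cv g a A Hamono HA) as [l Hl]; auto.
  { intro N. apply (cv_ge (fun K => Eb P (Qprod q) N K i)); auto. exists 0%nat. intros.
    apply Eb_nonneg; auto. apply Qprod_nonneg; auto. }
  exists l, g; auto.
Qed.

Lemma sum_tail (d : nat -> R) N0 L : (N0 <= L)%nat ->
  sum_f_R0 (fun j => if Nat.leb j N0 then 0 else d j) L = sum_f_R0 d L - sum_f_R0 d N0.
Proof.
  intro H. induction H.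
  - transitivity (sum_f_R0 (fun _ => 0) N0).
    + apply sum_eq; intros j Hj. replace (Nat.leb j N0) with true; auto. symmetry; apply Nat.leb_le; auto.
    + rewrite sum_cte; ring.
  - rewrite !tech5, IHle. cbv beta. destruct (Nat.leb (S m) N0) eqn:E; [apply Nat.leb_le in E; lia|ring].
Qed.

Lemma sum_lin (f g : nat -> R) M c L :
  sum_f_R0 (fun j => M * (f j * c + g j)) L = M * (c * sum_f_R0 f L + sum_f_R0 g L).
Proof. induction L; simpl; [ring|rewrite IHL; ring]. Qed.

Lemma stay_le1 N0 p : stay_above N0 p <= 1.
Proof. unfold stay_above; destruct forallb; lra. Qed.

Lemma part3_core P (HP : forall i j, 0 <= P i j) (Hrow : forall i K, sum_f_R0 (P i) K <= 1)
  q D M (HD : infinite_sum (dplus q) D) (HM0 : 0 <= M)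
  (Hdiag : forall j N K, Eb P (Lfun D j) N K j <= M) N0 N K i (HiN0 : (N0 < i)%nat) :
  D * Eb P (Sfun q) N K i <=
  D + M * ((1 - Eb P (stay_above N0) N K i) * D + (D - sum_f_R0 (dplus q) N0)).
Proof.
  pose proof (D_nonneg q D HD) as HD0.
  pose proof (Eb_Sfun_jensen q P D HP HD N K i) as J.
  set (L := max i K) in J.
  set (T := Eb P (stay_above N0) N K i).
  assert (HT1 : T <= 1).
  { eapply Rle_trans; [|apply (Eb_one_le P HP Hrow N K i)]. apply Eb_mono; auto. intros; apply stay_le1. }
  assert (HT0 : 0 <= T) by (apply Eb_nonneg; auto; apply stay_nonneg).
  assert (H1 : Eb P (fun _ => 1) N K i <= 1) by (apply Eb_one_le; auto).
  assert (HSL : sum_f_R0 (dplus q) L <= D) by (apply infsum_partial_le; auto; apply dplus_nonneg).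
  assert (HSN0 : sum_f_R0 (dplus q) N0 <= D) by (apply infsum_partial_le; auto; apply dplus_nonneg).
  assert (Hterm : forall j, dplus q j * Eb P (Lfun D j) N K i <=
      dplus q j + M * (dplus q j * (1 - T) + (if Nat.leb j N0 then 0 else dplus q j))).
  { intro j. pose proof (dplus_nonneg q j) as Hdj.
    assert (HE : Eb P (Lfun D j) N K i <= 1 + M * (if Nat.leb j N0 then 1 - T else 1)).
    { destruct (Nat.eq_dec i j) as [<-|Hij].
      - replace (Nat.leb i N0) with false by (symmetry; apply Nat.leb_gt; lia).
        specialize (Hdiag i N K); lra.
      - pose proof (LA P HP Hrow D j M K HD0 HM0 (fun N' K' => Hdiag j N' K') N i Hij) as HA.
        destruct (Nat.leb j N0) eqn:Ej.
        + apply Nat.leb_le in Ej. pose proof (LB P HP Hrow j N0 K Ej N i Hij).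
          assert (M * Hh P j N K i <= M * (1 - T)) by (apply Rmult_le_compat_l; unfold T in *; lra). lra.
        + pose proof (LB P HP Hrow j j K (le_n j) N i Hij).
          pose proof (Eb_nonneg P HP (stay_above j) N K i (stay_nonneg j)).
          assert (M * Hh P j N K i <= M * 1) by (apply Rmult_le_compat_l; lra). lra. }
    assert (dplus q j * Eb P (Lfun D j) N K i <= dplus q j * (1 + M * (if Nat.leb j N0 then 1 - T else 1)))
      by (apply Rmult_le_compat_l; auto).
    assert (0 <= M * (dplus q j * (1 - T))) by (apply Rmult_le_pos; auto; apply Rmult_le_pos; lra).
    destruct (Nat.leb j N0).
    - assert (dplus q j * (1 + M * (1 - T)) = dplus q j + M * (dplus q j * (1 - T) + 0)) by ring. lra.
    - assert (dplus q j * (1 + M * 1) + M * (dplus q j * (1 - T)) = dplus q j + M * (dplus q j * (1 - T) + dplus q j)) by ring. lra. }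
  assert (HS : sum_f_R0 (fun j => dplus q j * Eb P (Lfun D j) N K i) L <=
     sum_f_R0 (dplus q) L + M * ((1 - T) * sum_f_R0 (dplus q) L + (sum_f_R0 (dplus q) L - sum_f_R0 (dplus q) N0))).
  { eapply Rle_trans; [apply sum_Rle; intros j _; apply Hterm|].
    rewrite sum_plus. rewrite <- (sum_tail (dplus q) N0 L) by (unfold L; lia).
    right. f_equal. apply sum_lin. }
  assert ((D - sum_f_R0 (dplus q) L) * Eb P (fun _ => 1) N K i <= (D - sum_f_R0 (dplus q) L) * 1)
    by (apply Rmult_le_compat_l; lra).
  assert (M * ((1 - T) * sum_f_R0 (dplus q) L + (sum_f_R0 (dplus q) L - sum_f_R0 (dplus q) N0)) <=
          M * ((1 - T) * D + (D - sum_f_R0 (dplus q) N0))).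
  { apply Rmult_le_compat_l; auto. nra. }
  lra.
Qed.

Lemma bound_f Q q f i c : is_f Q q f ->
  (forall N, exists K0, forall K, (K0 <= K)%nat -> Eb (Pmat Q q) (Qprod q) N K i <= c) -> f i <= c.
Proof.
  intros Hf HB. destruct (Hf i) as [g [Hg Hl]].
  apply (cv_le g); auto. exists 0%nat. intros N _. apply (cv_le _ _ _ (Hg N)). auto.
Qed.

Theorem proposition3 (Q : nat -> nat -> R) (q : nat -> R) (D : R)
  (HQnn : forall i j, 0 <= Q i j)
  (Hq : forall i, infinite_sum (fun j => Q i j) (q i))
  (Hqpos : forall i, 0 < q i)
  (Hirr : irreducible Q)
  (HD : infinite_sum (fun j => dplus q j) D) :
  (* E_i exp(sum_j delta^+(j) l(j)) <= sup_j E_i e^{D l(j)} (in [0,oo]) *)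
  (forall i M,
     (forall j, Einf_le (Pmat Q q) (Lfun D j) i M) ->
     Einf_le (Pmat Q q) (Sfun q) i M)
  /\
  (* if the RHS is finite for every i: (C) holds and f(i) <= RHS *)
  ((forall i, exists M, forall j, Einf_le (Pmat Q q) (Lfun D j) i M) ->
     condC Q q /\
     exists f, is_f Q q f /\
       (forall i M, (forall j, Einf_le (Pmat Q q) (Lfun D j) i M) -> f i <= M))
  /\
  (* in addition: escape to infinity and sup_i E_i e^{D l(i)} < oo
     give limsup_i f(i) <= 1 *)
  ((forall i, exists M, forall j, Einf_le (Pmat Q q) (Lfun D j) i M) ->
   (forall (N : nat) (eps : R), 0 < eps ->
      exists I : nat, forall i : nat, (I <= i)%nat ->
        forall Mh : nat, Efin_ge (Pmat Q q) (stay_above N) Mh i (1 - eps)) ->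
   (exists M, forall i, Einf_le (Pmat Q q) (Lfun D i) i M) ->
   exists f, is_f Q q f /\
     (forall eps, 0 < eps -> exists I : nat, forall i : nat, (I <= i)%nat ->
        f i <= 1 + eps)).
Proof.
  pose proof (Pmat_nonneg Q q HQnn Hqpos) as HP.
  pose proof (Pmat_row Q q HQnn Hq Hqpos) as Hrow.
  assert (HD' : infinite_sum (dplus q) D) by exact HD.
  pose proof (D_nonneg q D HD') as HD0.
  assert (HCS : forall N K i, Eb (Pmat Q q) (Cfun q) N K i = Eb (Pmat Q q) (Sfun q) N K i).
  { intros; apply Eb_ext; intros; apply Cfun_Sfun; auto. }
  assert (HQS : forall N K i, Eb (Pmat Q q) (Qprod q) N K i <= Eb (Pmat Q q) (Sfun q) N K i).
  { intros; rewrite <- HCS; apply Eb_mono; auto; intros; apply Qprod_le_Cfun; auto. }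
  assert (Part1 : forall i M, (forall j, Einf_le (Pmat Q q) (Lfun D j) i M) -> Einf_le (Pmat Q q) (Sfun q) i M).
  { intros i M HM N K. apply Sfun_bound1 with (D := D); auto. intro j; apply HM. }
  assert (Part2 : (forall i, exists M, forall j, Einf_le (Pmat Q q) (Lfun D j) i M) ->
     exists f, is_f Q q f /\
       (forall i M, (forall j, Einf_le (Pmat Q q) (Lfun D j) i M) -> f i <= M)).
  { intro Hex.
    assert (Hper : forall i, exists l, exists g,
       (forall N, Un_cv (fun K => Eb (Pmat Q q) (Qprod q) N K i) (g N)) /\ Un_cv g l).
    { intro i. destruct (Hex i) as [M HM]. apply per_i with M; auto.
      intros N K. rewrite HCS. apply Part1; auto. }
    exists (fun i => proj1_sig (constructive_indefinite_description _ (Hper i))).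
    assert (Hisf : is_f Q q (fun i => proj1_sig (constructive_indefinite_description _ (Hper i)))).
    { intro i. destruct (constructive_indefinite_description _ (Hper i)) as [l Hl]; simpl; exact Hl. }
    split; auto.
    intros i M HM. apply (bound_f Q q _ i M Hisf). intro N. exists 0%nat. intros K _.
    eapply Rle_trans; [apply HQS|]. apply Part1; auto. }
  split; [exact Part1|]. split.
  - intro Hex. split; [|apply Part2; auto].
    intro i. destruct (Hex i) as [M HM]. exists M. intros N K. rewrite HCS. apply Part1; auto.
  - intros Hex Hstay [M HM].
    destruct (Part2 Hex) as [f [Hisf _]]. exists f; split; auto.
    intros eps Heps.
    assert (HM1 : 1 <= M).
    { pose proof (HM 0%nat 0%nat 0%nat) as H0. unfold Eb in H0. cbn [boxsum pw] in H0.
      pose proof (Lfun_ge1 D 0 [0%nat] HD0). lra. }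
    destruct HD0 as [HDp|HDz].
    + set (c := eps / (2 * M)).
      assert (Hc : 0 < c) by (unfold c; apply Rdiv_lt_0_compat; lra).
      assert (HMc : M * c = eps / 2) by (unfold c; field; lra).
      destruct (HD (c * D)) as [N0 HN0]; [apply Rmult_lt_0_compat; lra|].
      specialize (HN0 N0 (le_n N0)). unfold Rdist in HN0. apply Rabs_def2 in HN0.
      destruct HN0 as [HN0a HN0b].
      destruct (Hstay N0 (c / 2)) as [I HI]; [lra|].
      exists (max I (S N0)). intros i Hi. apply (bound_f Q q f i _ Hisf). intro N.
      destruct (HI i ltac:(lia) N (1 - c)) as [K0 HK0]; [lra|].
      exists K0. intros K HK.
      eapply Rle_trans; [apply HQS|].
      pose proof (part3_core (Pmat Q q) HP Hrow q D M HD' ltac:(lra) (fun j N K => HM j N K) N0 N K i ltac:(lia)) as Hc3.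
      assert (HT : 1 - c <= Eb (Pmat Q q) (stay_above N0) N K i).
      { eapply Rle_trans; [exact HK0|]. apply Eb_monoK; auto. apply stay_nonneg. }
      assert (Hsum : (1 - Eb (Pmat Q q) (stay_above N0) N K i) * D + (D - sum_f_R0 (dplus q) N0) <= 2 * c * D).
      { assert ((1 - Eb (Pmat Q q) (stay_above N0) N K i) * D <= c * D) by (apply Rmult_le_compat_r; lra).
        change (sum_f_R0 (dplus q) N0) with (sum_f_R0 (fun j => dplus q j) N0). lra. }
      assert (M * ((1 - Eb (Pmat Q q) (stay_above N0) N K i) * D + (D - sum_f_R0 (dplus q) N0)) <= M * (2 * c * D))
        by (apply Rmult_le_compat_l; lra).
      assert (M * (2 * c * D) = eps * D) by (rewrite <- (Rmult_comm c), <- Rmult_assoc, <- Rmult_assoc; nra).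
      apply Rmult_le_reg_l with D; auto. nra.
    + exists 0%nat. intros i _. apply (bound_f Q q f i _ Hisf). intro N. exists 0%nat. intros K _.
      eapply Rle_trans; [apply HQS|].
      rewrite (Eb_ext _ _ (fun _ => 1)) by (intros; apply D0_Sfun with D; auto).
      pose proof (Eb_one_le _ HP Hrow N K i). lra.
Qed.
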